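(* Let $p\ge 1$, let $\mathbf{S}$ be a real symmetric positive semidefinite $p\times p$ matrix, let $\mathbf{T}$ be a real symmetric positive definite $p\times p$ matrix, and let $\lambda_a\in(0,\infty)$. Consider the penalized log-likelihood $$\mathcal{L}^{p}(\mathbf{\Omega}) = \ln|\mathbf{\Omega}| - \mathrm{tr}(\mathbf{S}\mathbf{\Omega}) - \frac{\lambda_a}{2}\,\mathrm{tr}\big[(\mathbf{\Omega}-\mathbf{T})^{\mathrm{T}}(\mathbf{\Omega}-\mathbf{T})\big]$$ over real symmetric positive definite $p\times p$ matrices $\mathbf{\Omega}$. Then $\mathcal{L}^p$ is maximized by $$\hat{\mathbf{\Omega}}^{\mathrm{I}a}(\lambda_a) = \Big\{\Big[\lambda_a\mathbf{I}_p + \tfrac14(\mathbf{S}-\lambda_a\mathbf{T})^2\Big]^{1/2} + \tfrac12(\mathbf{S}-\lambda_a\mathbf{T})\Big\}^{-1},$$ which is the solution of the stationarity equation $\mathbf{\Omega}^{-1} - (\mathbf{S}-\lambda_a\mathbf{T}) - \lambda_a\mathbf{\Omega} = \mathbf{0}$.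
   Context: $|\cdot|$ denotes the determinant, $\mathbf{I}_p$ the $p\times p$ identity matrix. For a real symmetric positive definite matrix $\mathbf{H}$, $\mathbf{H}^{1/2}$ denotes its unique symmetric positive definite square root. *)

(* Defs.v *)
From mathcomp Require Import all_boot all_fingroup.
From Stdlib Require Import Reals.
Set Implicit Arguments. Unset Strict Implicit. Unset Printing Implicit Defensive.
Local Open Scope R_scope.

Definition mat (p : nat) := 'I_p -> 'I_p -> R.

Definition madd p (A B : mat p) : mat p := fun i j => A i j + B i j.
Definition msub p (A B : mat p) : mat p := fun i j => A i j - B i j.
Definition mscale p (c : R) (A : mat p) : mat p := fun i j => c * A i j.
Definition mmul p (A B : mat p) : mat p :=
  fun i j => \big[Rplus/0]_(k < p) (A i k * B k j).
Definition mtr p (A : mat p) : mat p := fun i j => A j i.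
Definition eyem p : mat p := fun i j => if i == j then 1 else 0.
Definition zerom p : mat p := fun _ _ => 0.

Definition trace p (A : mat p) : R := \big[Rplus/0]_(i < p) A i i.

Definition det p (A : mat p) : R :=
  \big[Rplus/0]_(s : 'S_p)
     ((if odd_perm s then -1 else 1) * \big[Rmult/1]_(i < p) A i (s i)).

Definition quad p (A : mat p) (x : 'I_p -> R) : R :=
  \big[Rplus/0]_(i < p) \big[Rplus/0]_(j < p) (x i * A i j * x j).

Definition symmetric p (A : mat p) : Prop := forall i j, A i j = A j i.
Definition psd p (A : mat p) : Prop :=
  symmetric A /\ forall x : 'I_p -> R, 0 <= quad A x.
Definition pd p (A : mat p) : Prop :=
  symmetric A /\ forall x : 'I_p -> R, (exists i, x i <> 0) -> 0 < quad A x.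

Definition is_spd_sqrt p (H X : mat p) : Prop := pd X /\ mmul X X = H.

Definition penloglik p (S T : mat p) (la : R) (Om : mat p) : R :=
  ln (det Om) - trace (mmul S Om)
  - la / 2 * trace (mmul (mtr (msub Om T)) (msub Om T)).

(* Main.v *)
Require Import Defs.
From mathcomp Require Import all_boot all_fingroup.
From Stdlib Require Import Reals.
Set Warnings "-all".
From Stdlib Require Import Lra FunctionalExtensionality.
Local Open Scope R_scope.

(* Scalar facts proved with Stdlib tactics before mathcomp tactics shadow them. *)
Lemma sc_c : 1/2 + 1/2 = 1. Proof. field. Qed.
Lemma sc_q : 1/2 * (1/2) = 1/4. Proof. field. Qed.
Lemma sc_h (la : R) : la/2 + la/2 = la. Proof. field. Qed.

From HB Require Import structures.
From mathcomp Require Import all_order all_algebra.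
From mathcomp Require Import complex spectral sesquilinear.
From mathcomp Require Import Rstruct.
From mathcomp.algebra_tactics Require Import ring lra.
Import Order.TTheory GRing.Theory Num.Theory Num.Def.
Set Implicit Arguments. Unset Strict Implicit. Unset Printing Implicit Defensive.
Local Open Scope ring_scope.
Local Open Scope complex_scope.
Local Open Scope sesquilinear_scope.

Notation C := (R[i]).
Notation rc := (real_complex R).
Notation mapc A := (map_mx rc A).

Lemma rc_real (x : R) : (rc x) \is Num.real.
Proof. have <- : 'Re (rc x) = rc x by rewrite -complexRe. exact: Creal_Re. Qed.

Lemma conj_rc (x : R) : conjC (rc x) = rc x.
Proof. exact: conj_Creal (rc_real x). Qed.

Lemma mapc_tc m n (A : 'M[R]_(m, n)) : (mapc A)^t* = mapc (A^T).
Proof. by apply/matrixP=> i j; rewrite !mxE conj_rc. Qed.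

Lemma real_spectral n (A : 'M[R]_n) : A^T = A ->
  exists U : 'M[C]_n, exists d : 'I_n -> R,
    U \is unitarymx /\ mapc A = U^t* *m diag_mx (\row_i rc (d i)) *m U.
Proof.
move=> sA.
have H : mapc A \is hermsymmx.
  by apply/is_hermitianmxP; rewrite expr0 scale1r mapc_tc sA.
exists (spectralmx (mapc A)), (fun i => complex.Re (spectral_diag (mapc A) 0 i)).
split; first exact: spectral_unitarymx.
have /hermitian_normalmx/orthomx_spectralP E := H.
rewrite {1}E invmx_unitary ?spectral_unitarymx //.
congr (_ *m diag_mx _ *m _); apply/rowP=> i; rewrite mxE complexRe.
apply/esym/Creal_ReP.
by have /mxOverP := hermitian_spectral_diag_real H; apply.
Qed.

Lemma interp (g : R -> R) (s : seq R) :
  exists q : {poly R}, forall x, x \in s -> q.[x] = g x.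
Proof.
elim: s => [|y s [q Hq]]; first by exists 0.
have [ys|yNs] := boolP (y \in s).
  by exists q => x; rewrite inE => /orP[/eqP->|]; [exact: Hq|exact: Hq].
pose P := \prod_(z <- s) ('X - z%:P).
have Py : P.[y] != 0.
  rewrite horner_prod prodf_seq_neq0; apply/allP => z zs /=.
  by rewrite hornerXsubC subr_eq0; apply: contraNneq yNs => ->.
exists (q + ((g y - q.[y]) / P.[y]) *: P) => x; rewrite inE => /orP[/eqP->|xs].
  by rewrite hornerD hornerZ divfK // addrC subrK.
have Px : P.[x] = 0.
  by rewrite horner_prod (big_rem x) //= hornerXsubC subrr mul0r.
by rewrite hornerD hornerZ Hq // Px mulr0 addr0.
Qed.

Section FC.
Variable n : nat.
Variable U : 'M[C]_n.+1.
Variable d : 'I_n.+1 -> R.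
Hypothesis hU : U \is unitarymx.

Definition dg (g : R -> R) : 'M[C]_n.+1 := diag_mx (\row_i rc (g (d i))).
Definition rep (Y : 'M[R]_n.+1) (g : R -> R) := mapc Y = U^t* *m dg g *m U.

Lemma UUt : U *m U^t* = 1%:M. Proof. exact/unitarymxP. Qed.
Lemma UtU : U^t* *m U = 1%:M.
Proof. by have := mulmxKtV 1%:M hU erefl; rewrite mul1mx. Qed.

Lemma rep_inj Y Y' g g' : rep Y g -> rep Y' g' -> (forall i, g (d i) = g' (d i)) -> Y = Y'.
Proof.
move=> hY hY' e; apply: (map_mx_inj (f := rc)); rewrite hY hY'.
by congr (_ *m diag_mx _ *m _); apply/rowP=> i; rewrite !mxE e.
Qed.

Lemma rep_mul Y Y' g g' : rep Y g -> rep Y' g' -> rep (Y *m Y') (fun t => g t * g' t).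
Proof.
rewrite /rep map_mxM => -> ->.
rewrite -!mulmxA (mulmxA U) UUt mul1mx !mulmxA.
rewrite -(mulmxA _ (dg g)) /dg mulmx_diag; congr (_ *m diag_mx _ *m _).
by apply/rowP=> i; rewrite !mxE rmorphM.
Qed.

Lemma rep_add Y Y' g g' : rep Y g -> rep Y' g' -> rep (Y + Y') (fun t => g t + g' t).
Proof.
rewrite /rep map_mxD => -> ->.
rewrite -mulmxDl -mulmxDr; congr (_ *m _ *m _).
by apply/matrixP=> i j; rewrite !mxE; case: (i == j); rewrite ?mulr1n ?mulr0n ?rmorphD ?addr0.
Qed.

Lemma rep_scale Y g c : rep Y g -> rep (c *: Y) (fun t => c * g t).
Proof.
rewrite /rep map_mxZ => ->.
have -> : dg (fun t => c * g t) = rc c *: dg g.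
  by apply/matrixP=> i j; rewrite !mxE; case: (i == j); rewrite ?mulr1n ?mulr0n ?rmorphM ?mulr0.
by rewrite -scalemxAr -scalemxAl.
Qed.

Lemma rep_1 : rep 1%:M (fun _ => 1).
Proof.
rewrite /rep map_mx1 /dg.
have -> : (\row_i rc ((fun _ => 1) (d i)) : 'rV[C]_n.+1) = const_mx 1 by apply/rowP=> i; rewrite !mxE rmorph1.
by rewrite diag_const_mx mulmx1 UtU.
Qed.

Lemma rep_tr Y g : rep Y g -> Y^T = Y.
Proof.
move=> hY; apply: (map_mx_inj (f := rc)); rewrite -mapc_tc hY.
rewrite !trmx_mul !map_mxM trmxCK /dg tr_diag_mx mulmxA map_diag_mx.
by congr (_ *m diag_mx _ *m _); apply/rowP=> i; rewrite !mxE; exact: conj_rc.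
Qed.

Lemma rep_det Y g : rep Y g -> \det Y = \prod_i g (d i).
Proof.
move=> hY; apply: complexI; rewrite -det_map_mx hY rmorph_prod /=.
rewrite !det_mulmx mulrAC -det_mulmx UtU det1 mul1r det_diag.
by apply: eq_bigr => i _; rewrite mxE.
Qed.

Lemma rep_trace Y g : rep Y g -> \tr Y = \sum_i g (d i).
Proof.
move=> hY; apply: complexI; rewrite -trace_map_mx hY rmorph_sum /=.
rewrite mxtrace_mulC mulmxA UUt mul1mx mxtrace_diag.
by apply: eq_bigr => i _; rewrite mxE.
Qed.


Lemma rep_ex A g : rep A id -> exists Y, rep Y g.
Proof.
move=> hA; have [q Hq] := interp g [seq d i | i <- enum 'I_n.+1].
exists (horner_mx A q); rewrite /rep map_horner_mx hA -invmx_unitary //.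
rewrite horner_mx_uconjC ?unitarymx_unit // horner_mx_diag.
congr (_ *m diag_mx _ *m _); apply/rowP=> i; rewrite !mxE /= horner_map Hq //.
by apply: map_f; rewrite mem_enum.
Qed.

Lemma rep_pos Y g : rep Y g -> (forall i, 0 < g (d i)) ->
  forall x : 'rV[R]_n.+1, x != 0 -> 0 < (x *m Y *m x^T) 0 0.
Proof.
move=> hY gpos x x0.
suff : rc 0 < rc ((x *m Y *m x^T) 0 0) by rewrite ltcR.
rewrite rmorph0 (_ : rc ((x *m Y *m x^T) 0 0) = (mapc (x *m Y *m x^T)) 0 0); last first.
  by rewrite [RHS]mxE.
rewrite !map_mxM hY -mapc_tc.
set v := mapc x *m U^t*.
have -> : mapc x *m (U^t* *m dg g *m U) *m (mapc x)^t* = v *m dg g *m v^t*.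
  by rewrite /v !trmx_mul !map_mxM trmxCK !mulmxA.
have v0 : v != 0.
  apply: contra x0 => /eqP v0.
  have : v *m U = mapc x by rewrite /v -mulmxA UtU mulmx1.
  by rewrite v0 mul0mx => /esym/eqP; rewrite map_mx_eq0.
clearbody v.
have [j vj] : exists j, v 0 j != 0.
  case: (pickP (fun j => v 0 j != 0)) => [j vj|H]; first by exists j.
  case/eqP: v0; apply/rowP=> j; rewrite [RHS]mxE.
  by have /negbFE/eqP := H j.
rewrite mul_mx_diag mxE (bigD1 j) //=.
have term k : 0 <= (\matrix_(i0, j0) (v i0 j0 * (\row_i rc (g (d i))) 0 j0)) 0 k * v^t* k 0.
  rewrite !mxE -mulrA [rc _ * _]mulrC mulrA -normCK mulrC.
  by apply: mulr_ge0; [rewrite ler0c; exact: ltW | exact: exprn_ge0].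
apply: ltr_wpDr; first by apply: sumr_ge0 => k _; exact: term.
rewrite !mxE -mulrA [rc _ * _]mulrC mulrA -normCK mulrC.
by apply: mulr_gt0; [rewrite -(rmorph0 rc) ltcR | rewrite exprn_gt0 // normr_gt0].
Qed.


Lemma eig_pos A : A^T = A -> rep A id ->
  (forall x : 'rV[R]_n.+1, x != 0 -> 0 < (x *m A *m x^T) 0 0) -> forall i, 0 < d i.
Proof.
move=> sA hA pA i.
set w := row i U.
set a := map_mx (@complex.Re R) w.
set b := map_mx (@complex.Im R) w.
have wE : w = mapc a + 'i *: mapc b.
  apply/matrixP=> k l; rewrite !mxE; exact: complexE.
have tcE : forall m1 m2 (X : 'M[C]_(m1, m2)) (Y : 'M[C]_(m1, m2)) (k : C),
    (X + k *: Y)^t* = X^t* + k^* *: Y^t*.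
  by move=> m1 m2 X Y k; apply/matrixP=> r s; rewrite !mxE rmorphD rmorphM.
have wtc : w^t* = (mapc a)^T - 'i *: (mapc b)^T.
  by rewrite wE tcE !mapc_tc conjCi scaleNr !map_trmx.
set mA := mapc A.
have sym1 : forall u v : 'rV[C]_n.+1, v *m mA *m u^T = u *m mA *m v^T.
  move=> u v; have t11 : forall M : 'M[C]_1, M^T = M.
    by move=> M; apply/matrixP=> r s; rewrite !ord1 mxE.
  rewrite -[LHS]t11 !trmx_mul trmxK /mA map_trmx sA mulmxA //.
have key : w *m mA *m w^t* =
    mapc a *m mA *m (mapc a)^T + mapc b *m mA *m (mapc b)^T.
  rewrite wtc {1}wE !mulmxDl !mulmxDr -!scalemxAl.
  rewrite !mulmxN -!scalemxAr (sym1 (mapc a) (mapc b)) scalerN scalerA -expr2 sqrCi.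
  by rewrite scaleN1r opprK addrA addrNK.
have eT : ('e_i : 'rV[C]_n.+1)^t* = ('e_i)^T.
  by apply/matrixP => r s; rewrite !mxE rmorph_nat.
have val : (w *m mA *m w^t*) 0 0 = rc (d i).
  rewrite /mA hA /w rowE !trmx_mul !map_mxM !mulmxA -(mulmxA 'e_i U) UUt mulmx1.
  rewrite -(mulmxA _ U) UUt mulmx1.
  rewrite -rowE row_diag_mx -scalemxAl.
  by rewrite eT trmx_delta mul_delta_mx !mxE /= mulr1.
have qge0 : forall x : 'rV[R]_n.+1, 0 <= (x *m A *m x^T) 0 0.
  move=> x; have [->|x0] := eqVneq x 0; first by rewrite !mul0mx mxE.
  exact/ltW/pA.
have ab0 : (a != 0) || (b != 0).
  rewrite -negb_and; apply/negP => /andP[/eqP a0 /eqP b0].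
  have w0 : w = 0 by rewrite wE a0 b0 !map_mx0 scaler0 addr0.
  have : w *m w^t* = 1%:M.
    rewrite /w rowE !trmx_mul !map_mxM mulmxA -(mulmxA _ U) UUt mulmx1 eT trmx_delta mul_delta_mx.
    by apply/matrixP=> r s; rewrite !ord1 !mxE.
  by rewrite w0 mul0mx => /matrixP/(_ 0 0); rewrite !mxE /= => /eqP; rewrite eq_sym oner_eq0.
have : rc (d i) = rc ((a *m A *m a^T) 0 0 + (b *m A *m b^T) 0 0).
  have qc : forall x : 'rV[R]_n.+1, rc ((x *m A *m x^T) 0 0) = (mapc x *m mA *m (mapc x)^T) 0 0.
    move=> x; have -> : (mapc x)^T = mapc (x^T) by apply/matrixP=> r s; rewrite !mxE.
    by rewrite /mA -!map_mxM [RHS]mxE.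
  by rewrite -val key [LHS]mxE rmorphD -!qc.
move/complexI => ->.
case/orP: ab0 => [a0|b0].
  by apply: ltr_wpDr; [exact: qge0 | exact: pA].
by apply: ltr_pwDr; [exact: pA | exact: qge0].
Qed.

End FC.

Lemma lnle (x y : R) : 0 < x -> x <= y -> ln x <= ln y.
Proof.
move=> /RltP x0 /RleP xy; apply/RleP.
case: (Rle_lt_or_eq_dec _ _ xy) => [lt|->]; last exact: Rle_refl.
exact/Rlt_le/ln_increasing.
Qed.

Lemma le_exp1 (x : R) : x <= exp (x - 1).
Proof.
have := exp_ineq1_le (x - 1) => /RleP.
by rewrite -[X in X <= _ -> _]/(1 + (x - 1)) addrC subrK.
Qed.

Lemma exp_sum k (e : 'I_k -> R) : \prod_i exp (e i) = exp (\sum_i e i).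
Proof.
elim/big_rec2: _ => [|i x y _ ->]; first by rewrite exp_0.
by rewrite exp_plus.
Qed.

Lemma amgm k (e : 'I_k -> R) : (forall i, 0 < e i) ->
  \prod_i e i <= exp (\sum_i e i - k%:R).
Proof.
move=> ep.
apply: (@le_trans _ _ (\prod_i exp (e i - 1))).
  by apply: ler_prod => i _; rewrite (ltW (ep i)) le_exp1.
rewrite exp_sum sumrB sumr_const card_ord.
by rewrite [_ *+ k](_ : _ = k%:R).
Qed.

Definition pdm n (A : 'M[R]_n) :=
  A^T = A /\ forall x : 'rV[R]_n, x != 0 -> 0 < (x *m A *m x^T) 0 0.
Definition Lm n (S T : 'M[R]_n) (h : R) (Om : 'M[R]_n) :=
  ln (\det Om) - \tr (S *m Om) - h * \tr ((Om - T)^T *m (Om - T)).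

Lemma trm_sub n (A B : 'M[R]_n) : (A - B)^T = A^T - B^T.
Proof. by apply/matrixP=> i j; rewrite !mxE. Qed.
Lemma trm_add n (A B : 'M[R]_n) : (A + B)^T = A^T + B^T.
Proof. by apply/matrixP=> i j; rewrite !mxE. Qed.
Lemma trm_scale n (a : R) (A : 'M[R]_n) : (a *: A)^T = a *: A^T.
Proof. by apply/matrixP=> i j; rewrite !mxE. Qed.

Theorem core n (S T : 'M[R]_n.+1) (la c q h : R) :
  S^T = S -> T^T = T -> 0 < la -> c + c = 1 -> c * c = q -> h + h = la ->
  exists X Om : 'M[R]_n.+1,
    pdm X /\ X *m X = la *: 1%:M + q *: ((S - la *: T) *m (S - la *: T)) /\
    Om *m (X + c *: (S - la *: T)) = 1%:M /\ (X + c *: (S - la *: T)) *m Om = 1%:M /\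
    pdm Om /\ (X + c *: (S - la *: T)) - (S - la *: T) - la *: Om = 0 /\
    forall Om', pdm Om' -> Lm S T h Om' <= Lm S T h Om.
Proof.
move=> sS sT la0 c2 cq h2.
set D := S - la *: T.
have sD : D^T = D by rewrite /D trm_sub trm_scale sS sT.
have [U [d [hU hD]]] := real_spectral sD.
have rD : rep U d D id by exact: hD.
have q0 : 0 <= q by rewrite -cq -expr2 sqr_ge0.
pose hx t := Num.sqrt (la + q * t ^+ 2).
have hx_sq t : hx t ^+ 2 = la + q * t ^+ 2.
  rewrite sqr_sqrtr //; apply: addr_ge0; first exact: ltW.
  by apply: mulr_ge0 => //; exact: sqr_ge0.
have hx_pos t : 0 < hx t.
  rewrite sqrtr_gt0 ltr_pwDl //; apply: mulr_ge0 => //; exact: sqr_ge0.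
pose hm t := hx t + c * t.
have hm_pos t : 0 < hm t.
  have lt : `|c * t| < hx t.
    rewrite -sqrtr_sqr ltr_sqrt; last first.
      rewrite ltr_pwDl //; apply: mulr_ge0 => //; exact: sqr_ge0.
    by rewrite exprMn -cq -expr2 ltr_pwDl.
  rewrite /hm -ltrBlDr sub0r.
  by apply: le_lt_trans lt; rewrite -normrN ler_norm.
have hm0 t : hm t != 0 by rewrite gt_eqF.
pose ho t := (hm t)^-1.
pose hk t := Num.sqrt (hm t).
have [X rX] := rep_ex hU (hx) rD.
have [Om rO] := rep_ex hU ho rD.
have [K rK] := rep_ex hU hk rD.
have rM : rep U d (X + c *: D) hm := rep_add rX (rep_scale c rD).
set M := X + c *: D.
have MO : M *m Om = 1%:M.
  apply: rep_inj (rep_mul hU rM rO) (rep_1 d hU) _ => i; exact: mulfV.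
have OM : Om *m M = 1%:M.
  apply: rep_inj (rep_mul hU rO rM) (rep_1 d hU) _ => i; exact: mulVf.
have stat : M - D - la *: Om = 0.
  apply/eqP; rewrite subr_eq0; apply/eqP.
  rewrite -scaleN1r.
  apply: rep_inj (rep_add rM (rep_scale (-1) rD)) (rep_scale la rO) _ => i /=.
  set t := d i; apply: (mulIf (hm0 t)); rewrite mulfVK //.
  rewrite /hm mulN1r /id.
  have -> : hx t + c * t - t = hx t - c * t + ((c + c) - 1) * t by ring.
  rewrite c2 subrr mul0r addr0.
  by rewrite -subr_sqr exprMn [c ^+ 2]expr2 hx_sq cq addrK.
exists X, Om.
split.
  split; first exact: rep_tr rX.
  by move=> x x0; exact: (rep_pos hU rX (fun i => hx_pos _) x0).
split.
  apply: rep_inj (rep_mul hU rX rX) (rep_add (rep_scale la (rep_1 d hU)) (rep_scale q (rep_mul hU rD rD))) _.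
  by move=> i /=; rewrite -!expr2 hx_sq mulr1.
split; first exact: OM.
split; first exact: MO.
split.
  split; first exact: rep_tr rO.
  have hop : forall i, 0 < ho (d i) by move=> i; rewrite invr_gt0.
  by move=> x x0; exact: (rep_pos hU rO hop x0).
split; first exact: stat.
move=> Om' [sO' pO'].
have KK : K *m K = M.
  apply: rep_inj (rep_mul hU rK rK) rM _ => i /=.
  by rewrite -expr2 sqr_sqrtr // ltW.
have sK : K^T = K := rep_tr rK.
set Cm := K *m Om' *m K.
have sC : Cm^T = Cm by rewrite /Cm !trmx_mul sK sO' mulmxA.
have pC : forall x : 'rV[R]_n.+1, x != 0 -> 0 < (x *m Cm *m x^T) 0 0.
  move=> x x0.
  have -> : x *m Cm *m x^T = (x *m K) *m Om' *m (x *m K)^T.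
    by rewrite /Cm trmx_mul sK !mulmxA.
  apply: pO'; apply: contra x0 => /eqP xK.
  have : x = x *m K *m K *m Om by rewrite -(mulmxA x K K) KK -mulmxA MO mulmx1.
  by rewrite xK !mul0mx => ->.
have [U2 [d2 [hU2 hC]]] := real_spectral sC.
have rC : rep U2 d2 Cm id by exact: hC.
have eig := eig_pos hU2 sC rC pC.
have detC : \det Cm = \prod_i d2 i := rep_det hU2 rC.
have trC : \tr Cm = \sum_i d2 i := rep_trace hU2 rC.
have detCE : \det Cm = \det M * \det Om'.
  by rewrite /Cm !det_mulmx mulrAC -det_mulmx KK.
have trCE : \tr Cm = \tr (M *m Om').
  by rewrite /Cm mxtrace_mulC mulmxA KK.
have detMpos : 0 < \det M.
  by rewrite (rep_det hU rM); apply: prodr_gt0 => i _.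
have detOpos : 0 < \det Om.
  by rewrite (rep_det hU rO); apply: prodr_gt0 => i _; rewrite invr_gt0.
have detCpos : 0 < \det Cm by rewrite detC; apply: prodr_gt0 => i _.
have detO'pos : 0 < \det Om' by move: detCpos; rewrite detCE pmulr_rgt0.
have detMO : \det Om = (\det M)^-1.
  have dM0 : \det M != 0 by rewrite gt_eqF.
  by apply: (mulfI dM0); rewrite -det_mulmx MO det1 mulfV.
have lnC : ln (\det Cm) <= \tr Cm - n.+1%:R.
  rewrite -[X in _ <= X]ln_exp; apply: lnle => //.
  by rewrite detC trC; exact: amgm.
have lnCE : ln (\det Cm) = ln (\det M) + ln (\det Om').
  by rewrite detCE ln_mult //; apply/RltP.
have lnO : ln (\det Om) = - ln (\det M).
  by rewrite detMO ln_Rinv //; apply/RltP.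
have trMO : \tr (M *m Om) = n.+1%:R by rewrite MO mxtrace1.
have sO : Om^T = Om := rep_tr rO.
set A := Om - T.
set Dl := Om' - Om.
have sA : A^T = A by rewrite /A trm_sub sO sT.
have E1 : Om' - T = A + Dl by apply/matrixP=> i j; rewrite !mxE; ring.
have E0 : Om' = Om + Dl by apply/matrixP=> i j; rewrite !mxE; ring.
have E2 : \tr ((A + Dl)^T *m (A + Dl)) =
    \tr (A^T *m A) + (\tr (A *m Dl) + \tr (A *m Dl)) + \tr (Dl^T *m Dl).
  rewrite trm_add sA mulmxDl (mulmxDr A A Dl) (mulmxDr Dl^T A Dl) !mxtraceD.
  rewrite -(mxtrace_tr (Dl^T *m A)) trmx_mul trmxK sA.
  ring.
have DD : 0 <= \tr (Dl^T *m Dl).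
  rewrite /mxtrace; apply: sumr_ge0 => i _; rewrite mxE; apply: sumr_ge0 => k _.
  by rewrite mxE -expr2 sqr_ge0.
have MD : M = S + la *: A.
  apply/matrixP=> i j; move/matrixP/(_ i j): stat; rewrite !mxE => st.
  lra.
have trMD : \tr (M *m Dl) = \tr (S *m Dl) + la * \tr (A *m Dl).
  by rewrite MD mulmxDl mxtraceD -scalemxAl mxtraceZ.
have trSO : \tr (S *m Om') = \tr (S *m Om) + \tr (S *m Dl).
  by rewrite E0 mulmxDr mxtraceD.
have trMO' : \tr (M *m Om') = \tr (M *m Om) + \tr (M *m Dl).
  by rewrite E0 mulmxDr mxtraceD.
have h0 : 0 < h by lra.
have hDD : 0 <= h * \tr (Dl^T *m Dl) by apply: mulr_ge0 => //; exact: ltW.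
rewrite /Lm E1 E2 trSO.
rewrite -/A.
move: lnC; rewrite lnCE trCE trMO' trMD trMO => lnC.
rewrite lnO.
rewrite !mulrDr -h2 !mulrDl in lnC *.
set a1 := h * \tr (A *m Dl) in lnC *.
lra.
Qed.

Definition tomx p (A : mat p) : 'M[R]_p := \matrix_(i, j) A i j.

Lemma tomx_inj p (A B : mat p) : tomx A = tomx B -> A = B.
Proof.
move/matrixP => H; apply: functional_extensionality => i.
apply: functional_extensionality => j; have := H i j; rewrite !mxE //.
Qed.

Lemma tomx_mmul p (A B : mat p) : tomx (mmul A B) = tomx A *m tomx B.
Proof. apply/matrixP=> i j; rewrite !mxE; apply: eq_bigr => k _; rewrite !mxE. by []. Qed.
Lemma tomx_madd p (A B : mat p) : tomx (madd A B) = tomx A + tomx B.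
Proof. by apply/matrixP=> i j; rewrite !mxE. Qed.
Lemma tomx_msub p (A B : mat p) : tomx (msub A B) = tomx A - tomx B.
Proof. by apply/matrixP=> i j; rewrite !mxE. Qed.
Lemma tomx_mscale p c (A : mat p) : tomx (mscale c A) = c *: tomx A.
Proof. by apply/matrixP=> i j; rewrite !mxE. Qed.
Lemma tomx_mtr p (A : mat p) : tomx (mtr A) = (tomx A)^T.
Proof. by apply/matrixP=> i j; rewrite !mxE. Qed.
Lemma tomx_eye p : tomx (@eyem p) = 1%:M.
Proof. by apply/matrixP=> i j; rewrite !mxE /eyem; case: (i == j). Qed.
Lemma tomx_zero p : tomx (@zerom p) = 0.
Proof. by apply/matrixP=> i j; rewrite !mxE. Qed.
Lemma trace_tomx p (A : mat p) : trace A = \tr (tomx A).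
Proof. by rewrite /trace /mxtrace; apply: eq_bigr => i _; rewrite mxE. Qed.
Lemma det_tomx p (A : mat p) : det A = \det (tomx A).
Proof.
rewrite /det /determinant; apply: eq_bigr => s _; congr (_ * _).
  by case: (odd_perm s).
by apply: eq_bigr => i _; rewrite mxE.
Qed.
Lemma quad_tomx p (A : mat p) x : quad A x = ((\row_i x i) *m tomx A *m (\row_i x i)^T) 0 0.
Proof.
rewrite /quad mxE exchange_big; apply: eq_bigr => j _.
rewrite !mxE mulr_suml; apply: eq_bigr => i _; rewrite !mxE //.
Qed.

Lemma pd_pdm p (A : mat p) : pd A -> pdm (tomx A).
Proof.
move=> [sA pA]; split.
  by apply/matrixP=> i j; rewrite !mxE sA.
move=> x x0.
have [i xi] : exists i, x 0 i != 0.
  case: (pickP (fun j => x 0 j != 0)) => [j vj|H]; first by exists j.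
  exfalso; move/eqP: x0; apply; apply/rowP=> j; rewrite [RHS]mxE.
  by have /negbFE/eqP := H j.
have := pA (fun i => x 0 i) (ex_intro _ i (elimN eqP xi)) => /RltP.
rewrite quad_tomx.
have -> : \row_i x 0 i = x by apply/rowP=> j; rewrite mxE.
by [].
Qed.

Lemma pdm_pd p (A : mat p) : pdm (tomx A) -> pd A.
Proof.
move=> [sA pA]; split.
  by move=> i j; move/matrixP/(_ j i): sA; rewrite !mxE.
move=> x [i xi]; apply/RltP; rewrite quad_tomx; apply: pA.
apply/eqP => /matrixP/(_ 0 i); rewrite !mxE => h.
exact: xi.
Qed.

Local Open Scope R_scope.

Theorem lemma1 (p : nat) (S T : mat p) (la : R) :
  (1 <= p)%nat -> psd S -> pd T -> 0 < la ->
  exists (X Om : mat p),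
    let D := msub S (mscale la T) in
    let M := madd X (mscale (1/2) D) in
    is_spd_sqrt (madd (mscale la (@eyem p)) (mscale (1/4) (mmul D D))) X /\
    mmul Om M = @eyem p /\ mmul M Om = @eyem p /\
    pd Om /\
    msub (msub M D) (mscale la Om) = @zerom p /\
    (forall Om' : mat p, pd Om' -> penloglik S T la Om' <= penloglik S T la Om).
Proof.
move=> hp [sS _] [sT _] la0.
case: p hp S T sS sT => [//|n] _ S T sS sT.
have sS' : (tomx S)^T = tomx S by apply/matrixP=> i j; rewrite !mxE sS.
have sT' : (tomx T)^T = tomx T by apply/matrixP=> i j; rewrite !mxE sT.
have la0' : (0 < la)%R by apply/RltP.
have [X' [Om' [pX [XX [OM [MO [pO [st Lmax]]]]]]]] :=
  core sS' sT' la0' sc_c sc_q (sc_h la).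
exists (fun i j => X' i j), (fun i j => Om' i j).
have eX : tomx (fun i j => X' i j) = X' by apply/matrixP=> i j; rewrite !mxE.
have eO : tomx (fun i j => Om' i j) = Om' by apply/matrixP=> i j; rewrite !mxE.
move=> D M.
have eD : tomx D = (tomx S - la *: tomx T)%R by rewrite /D tomx_msub tomx_mscale.
have eM : tomx M = (X' + (1/2) *: (tomx S - la *: tomx T))%R.
  by rewrite /M tomx_madd tomx_mscale eX eD.
split.
  split; first by apply: pdm_pd; rewrite eX.
  apply: tomx_inj; rewrite tomx_mmul eX XX tomx_madd !tomx_mscale tomx_eye tomx_mmul eD.
  by [].
split; first by apply: tomx_inj; rewrite tomx_mmul eO eM OM tomx_eye.
split; first by apply: tomx_inj; rewrite tomx_mmul eO eM MO tomx_eye.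
split; first by apply: pdm_pd; rewrite eO.
split.
  by apply: tomx_inj; rewrite !tomx_msub tomx_madd !tomx_mscale eO eX eD tomx_zero.
move=> W pW.
have eL : forall V : mat n.+1,
    penloglik S T la V = Lm (tomx S) (tomx T) (la/2) (tomx V).
  move=> V; rewrite /penloglik /Lm det_tomx !trace_tomx !tomx_mmul tomx_mtr tomx_msub.
  by rewrite !RminusE RmultE.
rewrite !eL eO; apply/RleP; exact: Lmax (pd_pdm pW).
Qed.
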